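(* Let $x,y$ be integers and let $z_0,z_1$ be integers held by $S_0$ and $S_1$ respectively with $z_1-z_0\equiv 2\alpha\cdot x\cdot y\pmod N$ (as output by $\mathtt{SMUL}_{\mathrm{HSS}}$). Let $c^*=\llbracket(2\alpha)^{-1}\bmod N\rrbracket$ be a FastPai encryption of $(2\alpha)^{-1}\bmod N$ known to both servers. Run protocol $\mathtt{S2C}$: for $i\in\{0,1\}$, $S_i$ computes $w_i=\mathrm{DDLog}_N((c^* )^{z_i}\bmod N^2)$ and a FastPai encryption $\llbracket w_i\rrbracket$, and sends it to the other server; both then compute $C=\llbracket w_1\rrbracket\cdot\llbracket w_0\rrbracket^{-1}\bmod N^2$. Then $C$ is an encryption of $x\cdot y\bmod N$, i.e. $\mathrm{Dec}(C)\equiv x y\pmod N$.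
   Context: FastPai: for a security parameter $\kappa$, $l(\kappa)=4\kappa$. $N=PQ$ with $P,Q$ primes of $n(\kappa)/2$ bits, $p,q$ odd primes of $l(\kappa)/2$ bits, $p\mid P-1$, $q\mid Q-1$, $P\equiv Q\equiv3\pmod4$, $\gcd(P-1,Q-1)=2$, $\gcd(pq,(P-1)(Q-1)/(4pq))=1$. Private key $\alpha=pq$; $\beta=(P-1)(Q-1)/(4pq)$; $h=-y_0^{2\beta}\bmod N$ for random $y_0\in\mathbb{Z}_N^*$; public key $(N,h)$. $\mathrm{Enc}(m)=(1+N)^m(h^r\bmod N)^N\bmod N^2$, $r$ uniform in $\{0,1\}^{l(\kappa)}$, written $\llbracket m\rrbracket$; $\mathrm{Dec}(c)=L(c^{2\alpha}\bmod N^2)(2\alpha)^{-1}\bmod N$, $L(u)=(u-1)/N$. Negative integers $m$ are encoded as $N-|m|$. Ciphertext inverses and exponentiations (possibly by negative integers) are in $\mathbb{Z}_{N^2}^*$. $\mathrm{DDLog}_N(g)=\lfloor g/N\rfloor\cdot(g\bmod N)^{-1}\bmod N$ for $g\in[0,N^2)$ with $g\bmod N$ invertible mod $N$.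
   Formalization: The shares satisfy the exact integer equality z₁ − z₀ = 2α·x·y in place of the congruence modulo N, and the bit length n(κ) is taken greater than l(κ) = 4κ. Apart from conventions, each condition added here is assumed in the paper as well or is needed for the statement above to hold. *)

(* Defs.v *)
From mathcomp Require Import all_boot all_order all_algebra.
Set Implicit Arguments. Unset Strict Implicit. Unset Printing Implicit Defensive.
Import Order.TTheory GRing.Theory Num.Theory.
Local Open Scope ring_scope.

(* Modular inverse of a modulo n via Bezout coefficients: u*a + v*n = gcd a n,
   so when gcd a n = 1, (u mod n) is the inverse of a in Z_n^*. *)
Definition invmod (a n : int) : int := ((egcdz a n).1 %% n)%Z.

Definition powmod (g e n : int) : int :=
  if 0 <= e then ((g ^+ `|e|%N) %% n)%Z else ((invmod g n ^+ `|e|%N) %% n)%Z.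

Definition has_bits (b x : nat) : Prop := (2 ^ b.-1 <= x < 2 ^ b)%N.

Definition fp_beta (P Q p q : nat) : nat := ((P.-1 * Q.-1) %/ (4 * (p * q)))%N.

Definition fp_h (N y0 beta : nat) : int := ((- (y0%:Z ^+ (2 * beta)%N)) %% N%:Z)%Z.

Definition fp_Enc (N : nat) (h : int) (m : int) (r : nat) : int :=
  ((powmod (1 + N%:Z) m (N ^ 2)%N%:Z *
    ((((h ^+ r) %% N%:Z)%Z ^+ N) %% (N ^ 2)%N%:Z)%Z) %% (N ^ 2)%N%:Z)%Z.

Definition fp_L (N : nat) (u : int) : int := ((u - 1) %/ N%:Z)%Z.

Definition fp_Dec (N alpha : nat) (c : int) : int :=
  ((fp_L N ((c ^+ (2 * alpha)%N) %% (N ^ 2)%N%:Z)%Z *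
    invmod (2 * alpha)%N%:Z N%:Z) %% N%:Z)%Z.

Definition DDLog (N : nat) (g : int) : int :=
  (((g %/ N%:Z)%Z * invmod (g %% N%:Z)%Z N%:Z) %% N%:Z)%Z.

Definition ct_div (N : nat) (c1 c0 : int) : int :=
  ((c1 * invmod c0 (N ^ 2)%N%:Z) %% (N ^ 2)%N%:Z)%Z.

(* Main.v *)
Require Import Defs.
From mathcomp Require Import all_boot all_order all_algebra zify ring.
From mathcomp Require Import cyclic.
Set Implicit Arguments. Unset Strict Implicit. Unset Printing Implicit Defensive.
Import Order.TTheory GRing.Theory Num.Theory.
Local Open Scope ring_scope.

Lemma zZ0 (M : nat) (z : int) : (1 < M)%N -> ((z%:~R : 'Z_M) = 0 <-> (M%:Z %| z)%Z).
Proof.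
move=> M1.
have H : forall n : nat, (((Posz n)%:~R : 'Z_M) = 0 <-> (M %| n)%N).
  move=> n; change ((n%:R : 'Z_M) = 0 <-> (M %| n)%N); split.
    by move=> /(congr1 val); rewrite /= val_Zp_nat // => /eqP.
  by move=> /eqP Hn; apply: val_inj; rewrite /= val_Zp_nat.
case: z => n.
  by rewrite dvdzE -H.
rewrite NegzE mulrNz dvdzE abszN /= -H.
split; first by move=> /eqP; rewrite oppr_eq0 => /eqP.
by move=> ->; rewrite oppr0.
Qed.

Lemma zcong (M : nat) (a b : int) : (1 < M)%N ->
  ((a%:~R : 'Z_M) = b%:~R) <-> (a = b %[mod M%:Z])%Z.
Proof.
move=> M1; split.
  move=> H; apply/eqP; rewrite eqz_mod_dvd -zZ0 // rmorphB /= H subrr //.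
move=> /eqP; rewrite eqz_mod_dvd -zZ0 // rmorphB /= => /eqP.
by rewrite subr_eq0 => /eqP.
Qed.

Lemma iM0 (M : nat) : (1 < M)%N -> ((M%:Z)%:~R : 'Z_M) = 0.
Proof. by move=> M1; apply/zZ0 => //; rewrite dvdzz. Qed.

Lemma imod (M : nat) (a : int) : (1 < M)%N -> (((a %% M%:Z)%Z)%:~R : 'Z_M) = a%:~R.
Proof. by move=> M1; apply/zcong => //; rewrite modz_mod. Qed.

Lemma invmodZ (M : nat) (a : int) : (1 < M)%N -> (a%:~R : 'Z_M) \is a GRing.unit ->
  ((invmod a M%:Z)%:~R : 'Z_M) = (a%:~R)^-1.
Proof.
move=> M1 U.
have cop : coprimez a M.
  move/unitrP: (U) => [y [Hy _]].
  have Ey : ((Posz (val y))%:~R : 'Z_M) = y by exact: natr_Zp.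
  have Hy' : ((Posz (val y) * a)%:~R : 'Z_M) = (1%:~R) by rewrite rmorphM /= Ey Hy.
  move/zcong: Hy' => /(_ M1) /eqP; rewrite eqz_mod_dvd => /dvdzP [k Hk].
  apply/coprimezP; exists (Posz (val y), - k) => /=.
  by rewrite mulNr -Hk; ring.
rewrite /invmod; case: egcdzP => u v Huv _ /=.
rewrite imod //.
have Hua : ((u%:~R : 'Z_M) * a%:~R) = 1.
  rewrite -rmorphM /=.
  have -> : u * a = 1 - v * M%:Z by rewrite -(eqP cop) -Huv; ring.
  by rewrite rmorphB rmorphM /= iM0 // mulr0 subr0.
by apply: (mulIr U); rewrite Hua mulVr.
Qed.

Lemma onepow (R : comPzRingType) (n x : R) (k : nat) : n ^+ 2 = 0 ->
  (1 + x * n) ^+ k = 1 + x * n *+ k.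
Proof.
move=> n2; elim: k => [|k IH]; first by rewrite expr0 mulr0n addr0.
rewrite exprS IH.
have -> : (1 + x * n) * (1 + x * n *+ k) = 1 + x * n *+ k.+1 + x ^+ 2 * n ^+ 2 *+ k by ring.
by rewrite n2 mulr0 mul0rn addr0.
Qed.

Lemma inv_of (R : comUnitRingType) (x y : R) : x * y = 1 -> x^-1 = y.
Proof.
move=> H; have U : x \is a GRing.unit by apply/unitrPr; exists y.
by rewrite -[LHS]mulr1 -H mulKr.
Qed.

Lemma unitW (R : comUnitRingType) (n x y : R) (e : nat) : (0 < e)%N -> n ^+ 2 = 0 ->
  x ^+ e = 1 + y * n -> x \is a GRing.unit.
Proof.
move=> e0 n2 H; apply/unitrPr; exists (x ^+ e.-1 * (1 - y * n)).
rewrite mulrA -exprS prednK // H.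
have -> : (1 + y * n) * (1 - y * n) = 1 - y ^+ 2 * n ^+ 2 by ring.
by rewrite n2 mulr0 subr0.
Qed.

Lemma onepowz (R : comUnitRingType) (n : R) (j : int) : n ^+ 2 = 0 ->
  (1 + n) ^ j = 1 + j%:~R * n.
Proof.
move=> n2; case: j => k.
  change ((1 + n) ^+ k = 1 + k%:R * n).
  by have := onepow 1 k n2; rewrite mul1r => ->; rewrite mulr_natl.
change (((1 + n) ^+ k.+1)^-1 = 1 + (Negz k)%:~R * n).
rewrite NegzE mulrNz; apply: inv_of.
have := onepow 1 k.+1 n2; rewrite mul1r => ->.
have E : forall m : R, (1 + m * n) * (1 + - m * n) = 1.
  move=> m; have -> : (1 + m * n) * (1 + - m * n) = 1 - m ^+ 2 * n ^+ 2 by ring.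
  by rewrite n2 mulr0 subr0.
rewrite -mulr_natl; exact: E.
Qed.

Lemma N2gt1 (N : nat) : (1 < N)%N -> (1 < N ^ 2)%N.
Proof. by move=> N1; rewrite -mulnn (@leq_trans N) // leq_pmulr // ltnW. Qed.

Lemma nil2 (N : nat) : (1 < N)%N -> ((N%:Z)%:~R : 'Z_(N ^ 2)) ^+ 2 = 0.
Proof.
move=> N1; rewrite -rmorphXn /=.
have -> : (N%:Z) ^+ 2 = ((N ^ 2)%N)%:Z by rewrite expr2 -PoszM mulnn.
exact: iM0 (N2gt1 N1).
Qed.

Lemma dvdzN2 (N : nat) (a : int) : (N ^ 2)%N%:Z = N%:Z * N%:Z.
Proof. by rewrite -PoszM mulnn. Qed.

Lemma down (N : nat) (a b : int) : (1 < N)%N ->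
  ((a%:~R : 'Z_(N ^ 2)) = b%:~R) -> ((a%:~R : 'Z_N) = b%:~R).
Proof.
move=> N1 /zcong => /(_ (N2gt1 N1)) /eqP; rewrite eqz_mod_dvd => H.
apply/zcong => //; apply/eqP; rewrite eqz_mod_dvd; apply: dvdz_trans H.
by rewrite (dvdzN2 N 0) dvdz_mulr.
Qed.

Lemma liftN (N : nat) (a b : int) : (1 < N)%N ->
  ((a%:~R : 'Z_N) = b%:~R) ->
  (a%:~R : 'Z_(N ^ 2)) * (N%:Z)%:~R = b%:~R * (N%:Z)%:~R.
Proof.
move=> N1 /zcong => /(_ N1) /eqP; rewrite eqz_mod_dvd => /dvdzP [q Hq].
apply/eqP; rewrite -subr_eq0 -mulrBl -rmorphB Hq rmorphM /= -mulrA -expr2 nil2 // mulr0 //.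
Qed.

Lemma dropN (N : nat) (a b : int) : (1 < N)%N ->
  (a%:~R : 'Z_(N ^ 2)) * (N%:Z)%:~R = b%:~R * (N%:Z)%:~R ->
  ((a%:~R : 'Z_N) = b%:~R).
Proof.
move=> N1; rewrite -!rmorphM /= => /zcong => /(_ (N2gt1 N1)) /eqP.
rewrite eqz_mod_dvd -mulrBl (dvdzN2 N 0) dvdz_mul2r; last by rewrite eqz_nat -lt0n ltnW.
by move=> H; apply/zcong => //; apply/eqP; rewrite eqz_mod_dvd.
Qed.

Lemma unit_down (N : nat) (a : int) : (1 < N)%N ->
  (a%:~R : 'Z_(N ^ 2)) \is a GRing.unit -> (a%:~R : 'Z_N) \is a GRing.unit.
Proof.
move=> N1 /unitrPr [y Hy].
have Ey : ((Posz (val y))%:~R : 'Z_(N ^ 2)) = y by exact: natr_Zp.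
have H : ((a * Posz (val y))%:~R : 'Z_(N ^ 2)) = (1%:~R) by rewrite rmorphM /= Ey Hy.
move/(down N1): H; rewrite rmorphM /= => H.
by apply/unitrPr; exists ((Posz (val y))%:~R).
Qed.

Lemma powmodZ (M : nat) (c z : int) : (1 < M)%N -> (c%:~R : 'Z_M) \is a GRing.unit ->
  ((powmod c z M%:Z)%:~R : 'Z_M) = (c%:~R) ^ z.
Proof.
move=> M1 U; rewrite /powmod; case: z => k /=.
  by rewrite imod // rmorphXn.
by rewrite imod // rmorphXn /= invmodZ // exprVn.
Qed.

Lemma Npow (N : nat) (U : int) (e : nat) : (1 < N)%N ->
  (U%:~R : 'Z_N) ^+ e = 1 -> ((U ^+ N)%:~R : 'Z_(N ^ 2)) ^+ e = 1.
Proof.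
move=> N1 H.
have H' : ((U ^+ e)%:~R : 'Z_N) = 1%:~R by rewrite rmorphXn /= H.
move/zcong: H' => /(_ N1) /eqP; rewrite eqz_mod_dvd => /dvdzP [q Hq].
have E : U ^+ e = 1 + q * N%:Z by rewrite -Hq; ring.
rewrite rmorphXn /= exprAC -rmorphXn /= E rmorphD rmorphM /= rmorph1 onepow ?nil2 //.
by rewrite -mulr_natr -mulrA -expr2 nil2 // mulr0 addr0.
Qed.

Lemma encZ (N : nat) (h m : int) (r e : nat) : (1 < N)%N -> 0 <= m ->
  (h%:~R : 'Z_N) ^+ e = 1 ->
  exists W : 'Z_(N ^ 2), W ^+ e = 1 /\
    ((fp_Enc N h m r)%:~R : 'Z_(N ^ 2)) = (1 + m%:~R * (N%:Z)%:~R) * W.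
Proof.
move=> N1 m0 He.
have M1 := N2gt1 N1.
exists (((h ^+ r %% N%:Z)%Z ^+ N)%:~R); split.
  apply: Npow => //; rewrite imod // rmorphXn /= exprAC He expr1n //.
rewrite /fp_Enc imod // rmorphM /= imod //; congr (_ * _).
case: m m0 => // k _; rewrite /powmod /= imod // rmorphXn /= rmorphD /= rmorph1.
by have := onepow 1 k (nil2 N1); rewrite mul1r => ->; rewrite mulr_natl.
Qed.

Lemma ddlogZ (N : nat) (g0 g1 k : int) : (1 < N)%N ->
  (g0%:~R : 'Z_N) \is a GRing.unit ->
  (g1%:~R : 'Z_(N ^ 2)) = g0%:~R * (1 + k%:~R * (N%:Z)%:~R) ->
  ((DDLog N g1)%:~R : 'Z_N) = (DDLog N g0)%:~R + k%:~R.
Proof.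
move=> N1 U H.
have M1 := N2gt1 N1.
have H1 : (g1%:~R : 'Z_(N ^ 2)) = (g0 + g0 * k * N%:Z)%:~R.
  by rewrite H rmorphD !rmorphM /=; ring.
have Hm : (g1 %% N%:Z)%Z = (g0 %% N%:Z)%Z.
  have := down N1 H1; rewrite rmorphD rmorphM /= iM0 // mulr0 addr0.
  by move/zcong => /(_ N1).
have Eg1 := divz_eq g1 N%:Z; have Eg0 := divz_eq g0 N%:Z.
rewrite Hm in Eg1.
set b1 := (g1 %/ N%:Z)%Z in Eg1 *; set b0 := (g0 %/ N%:Z)%Z in Eg0 *.
set a := (g0 %% N%:Z)%Z in Eg0 Eg1 Hm *.
have Hb : (b1%:~R : 'Z_N) = (b0 + g0 * k)%:~R.
  apply: dropN => //.
  rewrite -!rmorphM /=.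
  have -> : b1 * N%:Z = g1 - a by rewrite [in RHS]Eg1; ring.
  have Eb0 : b0 * N%:Z = g0 - a by rewrite [in RHS]Eg0; ring.
  have -> : (b0 + g0 * k) * N%:Z = (g0 + g0 * k * N%:Z) - a by rewrite mulrDl Eb0; ring.
  by rewrite !rmorphB /= H1.
have Ua : (a%:~R : 'Z_N) = g0%:~R by rewrite imod.
rewrite /DDLog Hm !imod // !rmorphM /= invmodZ; last by rewrite Ua.
rewrite Hb rmorphD rmorphM /= -Ua mulrDl mulrAC mulrV ?mul1r //; try by rewrite Ua.
by rewrite ?Ua.
Qed.
Lemma t1 (P : nat) : (P %% 4 = 3)%N -> odd P.
Proof. move=> H; have : (P %% 2 = 1)%N by lia. by rewrite modn2; case: (odd P). Qed.
Lemma t2 (P : nat) : (P %% 4 = 3)%N -> (2 %| P.-1)%N.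
Proof. move=> H; lia. Qed.
Lemma t3 (n k : nat) : ~~ odd n -> (4 * k < n)%N -> ((4 * k)./2 <= (n./2).-1)%N.
Proof.
move=> ne nk; have := odd_double_half n; rewrite (negbTE ne) add0n => En.
have -> : (4 * k = (2 * k).*2)%N by rewrite -muln2; lia.
rewrite doubleK; rewrite -En -muln2 in nk; lia.
Qed.
Lemma t4 (a b : nat) : (2 * a * (2 * b) = a * (4 * b))%N.
Proof. ring. Qed.
Lemma t5 (P : nat) : (1 < P)%N -> (0 < P.-1)%N.
Proof. lia. Qed.
Lemma t6 (p P : nat) : (0 < P.-1)%N -> (p <= P.-1)%N -> (p < P)%N.
Proof. lia. Qed.
Lemma t7 (a b : nat) : (1 < a)%N -> (1 < b)%N -> (1 < a * b)%N.
Proof. nia. Qed.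
Lemma t8 (p q : nat) : (1 < p)%N -> (1 < q)%N -> (0 < 2 * (p * q))%N.
Proof. nia. Qed.
Lemma cpp (a b : nat) : prime a -> prime b -> a != b -> coprime a b.
Proof. by move=> pa pb ne; rewrite prime_coprime // dvdn_prime2. Qed.

Theorem theorem3
  (kappa n : nat) (P Q p q : nat) (y0 rstar r0 r1 : nat) (x y z0 z1 : int) :
  ~~ odd n -> (4 * kappa < n)%N ->
  prime P -> prime Q -> has_bits n./2 P -> has_bits n./2 Q ->
  prime p -> prime q -> odd p -> odd q ->
  has_bits (4 * kappa)./2 p -> has_bits (4 * kappa)./2 q ->
  (p %| P.-1)%N -> (q %| Q.-1)%N ->
  (P %% 4 = 3)%N -> (Q %% 4 = 3)%N ->
  gcdn P.-1 Q.-1 = 2%N ->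
  coprime (p * q) ((P.-1 * Q.-1) %/ (4 * (p * q))) ->
  (y0 < P * Q)%N -> coprime y0 (P * Q) ->
  (rstar < 2 ^ (4 * kappa))%N -> (r0 < 2 ^ (4 * kappa))%N -> (r1 < 2 ^ (4 * kappa))%N ->
  z1 - z0 = (2 * (p * q))%N%:Z * x * y ->
  let N := (P * Q)%N in
  let alpha := (p * q)%N in
  let h := fp_h N y0 (fp_beta P Q p q) in
  let cstar := fp_Enc N h (invmod (2 * alpha)%N%:Z N%:Z) rstar in
  let w0 := DDLog N (powmod cstar z0 (N ^ 2)%N%:Z) in
  let w1 := DDLog N (powmod cstar z1 (N ^ 2)%N%:Z) in
  let C := ct_div N (fp_Enc N h w1 r1) (fp_Enc N h w0 r0) in
  (fp_Dec N alpha C = x * y %[mod N%:Z])%Z.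
Proof.
move=> nev nk PP PQ bP bQ Pp Pq op oq bp bq dpP dqQ P4 Q4 g2 cop y0N cy0 _ _ _ Hz.
move=> N alpha h cstar w0 w1 C.
have P1 := prime_gt1 PP; have Q1 := prime_gt1 PQ.
have p1 := prime_gt1 Pp; have q1 := prime_gt1 Pq.
have N1 : (1 < N)%N by exact: t7.
have oP := t1 P4; have oQ := t1 Q4.
have d2P := t2 P4; have d2Q := t2 Q4.
have Pm0 := t5 P1.
have Qm0 := t5 Q1.
have pltP : (p < P)%N := t6 Pm0 (dvdn_leq Pm0 dpP).
have qltQ : (q < Q)%N := t6 Qm0 (dvdn_leq Qm0 dqQ).
have hb := t3 nev nk.
have pltQ : (p < Q)%N.
  case/andP: bp => _ bp2; case/andP: bQ => bQ1 _.
  apply: (leq_trans bp2); apply: leq_trans bQ1; by rewrite leq_exp2l.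
have qltP : (q < P)%N.
  case/andP: bq => _ bq2; case/andP: bP => bP1 _.
  apply: (leq_trans bq2); apply: leq_trans bP1; by rewrite leq_exp2l.
have PneQ : P != Q.
  apply/negP => /eqP EPQ; rewrite -EPQ gcdnn in g2.
  have : (p %| 2)%N by rewrite -g2.
  rewrite dvdn_prime2 // => /eqP Ep; by rewrite Ep in op.
have copPQ : coprime P Q by exact: cpp.
have M1 := N2gt1 N1.
have N0 : N%:Z != 0 by rewrite eqz_nat -lt0n ltnW.
set e := (2 * alpha)%N.
have e0 : (0 < e)%N by exact: t8.
have cope : coprime N e.
  rewrite /N /e /alpha !coprimeMl !coprimeMr !coprimen2 oP oQ /=.
  by rewrite !cpp // neq_ltn ?pltP ?qltQ ?pltQ ?qltP ?orbT.
have dvd4 : (4 * (p * q) %| P.-1 * Q.-1)%N.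
  have -> : (4 * (p * q) = (2 * p) * (2 * q))%N by ring.
  apply: dvdn_mul; rewrite Gauss_dvd ?coprime2n ?d2P ?d2Q //.
have Htot : totient N = (2 * fp_beta P Q p q * e)%N.
  rewrite /N totient_coprime // !totient_prime // /e /alpha /fp_beta.
  by rewrite -{1}(divnK dvd4); ring.
have Hh : (h%:~R : 'Z_N) ^+ e = 1.
  rewrite /h /fp_h imod // rmorphN rmorphXn /=.
  rewrite /e mulnC exprM sqrrN -exprM -exprM.
  have -> : (fp_beta P Q p q * 2 * 2 * alpha = totient N)%N by rewrite Htot /e; ring.
  change ((y0%:R : 'Z_N) ^+ totient N = 1); rewrite -natrX.
  by rewrite -(Zp_nat_mod N1) (Euler_exp_totient cy0) Zp_nat_mod.

have n2 := nil2 N1.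
set nn := ((N%:Z)%:~R : 'Z_(N ^ 2)) in n2 *.
have Ue : ((e%:Z)%:~R : 'Z_N) \is a GRing.unit by rewrite /= unitZpE.
set ms := invmod e%:Z N%:Z.
have ms0 : 0 <= ms by rewrite /ms /invmod modz_ge0.
have Hms : ((ms * e%:Z)%:~R : 'Z_N) = 1%:~R by rewrite rmorphM /= invmodZ // mulVr.
have [Wc [HWc Hc]] := encZ rstar N1 ms0 Hh.
have Hce : ((cstar%:~R : 'Z_(N ^ 2))) ^+ e = 1 + nn.
  rewrite /cstar Hc exprMn HWc mulr1 onepow // -mulr_natr -mulrA [nn * _]mulrC mulrA.
  have := liftN N1 Hms; rewrite rmorphM /= rmorph1 mul1r => ->; by [].
have Uc : (cstar%:~R : 'Z_(N ^ 2)) \is a GRing.unit.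
  by apply: (unitW (y := 1) e0 n2); rewrite mul1r.
have Hg0 := powmodZ z0 M1 Uc.
have Hg1 := powmodZ z1 M1 Uc.
have Hz1 : z1 = z0 + e%:Z * (x * y) by rewrite -[z1](subrK z0) Hz /e /alpha; ring.
have Hrel : ((powmod cstar z1 (N ^ 2)%N%:Z)%:~R : 'Z_(N ^ 2)) =
    (powmod cstar z0 (N ^ 2)%N%:Z)%:~R * (1 + (x * y)%:~R * nn).
  rewrite Hg1 Hg0 Hz1 exprzDr // -exprz_exp.
  by change ((cstar%:~R : 'Z_(N ^ 2)) ^ (Posz e)) with ((cstar%:~R : 'Z_(N ^ 2)) ^+ e); rewrite Hce onepowz.
have Ug0 : ((powmod cstar z0 (N ^ 2)%N%:Z)%:~R : 'Z_N) \is a GRing.unit.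
  by apply: unit_down => //; rewrite Hg0 unitrXz.
have Hw : (w1%:~R : 'Z_N) = w0%:~R + (x * y)%:~R by exact: ddlogZ.
have w00 : 0 <= w0 by rewrite /w0 /DDLog modz_ge0.
have w10 : 0 <= w1 by rewrite /w1 /DDLog modz_ge0.
have [W0 [HW0 HE0]] := encZ r0 N1 w00 Hh.
have [W1 [HW1 HE1]] := encZ r1 N1 w10 Hh.
set E0 := fp_Enc N h w0 r0 in HE0 *.
set E1 := fp_Enc N h w1 r1 in HE1 *.
have HEe : forall (E w : int) (W : 'Z_(N ^ 2)), W ^+ e = 1 ->
    (E%:~R : 'Z_(N ^ 2)) = (1 + w%:~R * nn) * W ->
    (E%:~R : 'Z_(N ^ 2)) ^+ e = 1 + (e%:Z * w)%:~R * nn.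
  move=> E w W HW ->; rewrite exprMn HW mulr1 onepow // rmorphM /=.
  by rewrite -mulr_natr; change ((e%:Z)%:~R : 'Z_(N ^ 2)) with (e%:R : 'Z_(N ^ 2)); ring.
have HE0e := HEe _ _ _ HW0 HE0.
have HE1e := HEe _ _ _ HW1 HE1.
have UE0 : (E0%:~R : 'Z_(N ^ 2)) \is a GRing.unit by exact: unitW e0 n2 HE0e.
have HC : (C%:~R : 'Z_(N ^ 2)) = E1%:~R * (E0%:~R)^-1.
  by rewrite /C /ct_div imod // rmorphM /= invmodZ.
have HCe : (C%:~R : 'Z_(N ^ 2)) ^+ e = 1 + (e%:Z * (w1 - w0))%:~R * nn.
  rewrite HC exprMn exprVn HE1e HE0e.
  have -> : (1 + (e%:Z * w0)%:~R * nn)^-1 = 1 - (e%:Z * w0)%:~R * nn.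
    apply: inv_of.
    have -> : forall a : 'Z_(N ^ 2), (1 + a * nn) * (1 - a * nn) = 1 - a ^+ 2 * nn ^+ 2 by move=> a; ring.
    by rewrite n2 mulr0 subr0.
  have -> : e%:Z * (w1 - w0) = e%:Z * w1 - e%:Z * w0 by ring.
  move: (e%:Z * w1) (e%:Z * w0) => a b; rewrite rmorphB /=.
  move: (a%:~R : 'Z_(N ^ 2)) (b%:~R : 'Z_(N ^ 2)) => a' b'.
  have -> : (1 + a' * nn) * (1 - b' * nn) = 1 + (a' - b') * nn - a' * b' * nn ^+ 2 by ring.
  by rewrite n2 mulr0 subr0.
rewrite /fp_Dec /fp_L.
set D := ((C ^+ e) %% (N ^ 2)%N%:Z)%Z.
have HD : (D%:~R : 'Z_(N ^ 2)) = 1 + (e%:Z * (w1 - w0))%:~R * nn by rewrite imod // rmorphXn.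
have [t Ht] : exists t, t = e%:Z * (w1 - w0) by eexists.
rewrite -Ht in HD; clearbody D.
have HD1 : (N%:Z %| D - 1)%Z.
  have : (D%:~R : 'Z_(N ^ 2)) = (1 + t * N%:Z)%:~R by rewrite HD rmorphD rmorphM.
  move/(down N1) => H3.
  have H4 : ((1 + t * N%:Z)%:~R : 'Z_N) = 1%:~R by rewrite rmorphD rmorphM /= iM0 // mulr0 addr0.
  move/zcong: (etrans H3 H4) => /(_ N1) /eqP.
  by rewrite eqz_mod_dvd.
set j := ((D - 1) %/ N%:Z)%Z.
have Hj0 : j * N%:Z = D - 1 by rewrite /j divzK.
have Hj : (j%:~R : 'Z_N) = t%:~R.
  apply: dropN => //.
  have HD' : ((D - 1)%:~R : 'Z_(N ^ 2)) = t%:~R * nn by rewrite rmorphB /= HD rmorph1 addrC addKr.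
  by rewrite -rmorphM /= Hj0; exact: HD'.
apply/zcong => //.
rewrite -/e imod // rmorphM /= Hj invmodZ // Ht rmorphM /= mulrAC mulrV // mul1r rmorphB /= Hw.
by rewrite addrC addKr.
Qed.
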